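(* Let $J\subseteq\mathbb{R}$ be an interval, $f:J\to\mathbb{R}$ convex, $a,b\in J$, and $\nu\in[0,1]$. Then $$2\widetilde r(\nu)\big(f(a)\nabla f(b)-f(a\nabla b)\big)\le f(a)\nabla_\nu f(b)-\mathfrak C_{f,\nu}(a,b)\le 2\widetilde R(\nu)\big(f(a)\nabla f(b)-f(a\nabla b)\big).$$
   Context: For real $x,y$ and $\mu\in[0,1]$, $x\nabla_\mu y:=(1-\mu)x+\mu y$ and $x\nabla y:=\frac{x+y}{2}$. For $f$ convex on an interval containing $a,b$, $$\mathfrak C_{f,\nu}(a,b):=(1-\nu)\int_0^1 f\big(a\nabla_{\nu\lambda}b\big)\,d\lambda+\nu\int_0^1 f\big(b\nabla_{(1-\nu)\lambda}a\big)\,d\lambda .$$ For $\lambda\in[0,1]$ let $r_1(\lambda)=\min\{\nu\lambda,1-\nu\lambda\}$, $r_2(\lambda)=\min\{(1-\nu)\lambda,1-(1-\nu)\lambda\}$, $R_1(\lambda)=\max\{\nu\lambda,1-\nu\lambda\}$, $R_2(\lambda)=\max\{(1-\nu)\lambda,1-(1-\nu)\lambda\}$, and $$\widetilde r(\nu):=\int_0^1\big((1-\nu)r_1(\lambda)+\nu r_2(\lambda)\big)d\lambda,\qquad \widetilde R(\nu):=\int_0^1\big((1-\nu)R_1(\lambda)+\nu R_2(\lambda)\big)d\lambda .$$ *)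

(* Defs.v *)
From Stdlib Require Import Reals.
From Coquelicot Require Import Coquelicot.
Open Scope R_scope.

Definition wmean (x y mu : R) : R := (1 - mu) * x + mu * y.
Definition amean (x y : R) : R := (x + y) / 2.

Definition is_interval (J : R -> Prop) : Prop :=
  forall x y z, J x -> J z -> x <= y -> y <= z -> J y.

Definition convex_on (J : R -> Prop) (f : R -> R) : Prop :=
  forall x y t, J x -> J y -> 0 <= t <= 1 ->
    f ((1 - t) * x + t * y) <= (1 - t) * f x + t * f y.

Definition Cfrak (f : R -> R) (nu a b : R) : R :=
  (1 - nu) * RInt (fun l => f (wmean a b (nu * l))) 0 1
  + nu * RInt (fun l => f (wmean b a ((1 - nu) * l))) 0 1.

Definition r1 (nu l : R) : R := Rmin (nu * l) (1 - nu * l).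
Definition r2 (nu l : R) : R := Rmin ((1 - nu) * l) (1 - (1 - nu) * l).
Definition R1 (nu l : R) : R := Rmax (nu * l) (1 - nu * l).
Definition R2 (nu l : R) : R := Rmax ((1 - nu) * l) (1 - (1 - nu) * l).

Definition r_tilde (nu : R) : R :=
  RInt (fun l => (1 - nu) * r1 nu l + nu * r2 nu l) 0 1.
Definition R_tilde (nu : R) : R :=
  RInt (fun l => (1 - nu) * R1 nu l + nu * R2 nu l) 0 1.

(* Main.v *)
Require Import Defs.
From Stdlib Require Import Reals Lra Classical.
From Coquelicot Require Import Coquelicot.
Open Scope R_scope.

Lemma cont_eps (g:R->R) z :
  (forall eps, 0<eps -> exists d, 0<d /\ forall x, Rabs (x - z) < d -> Rabs (g x - g z) < eps) ->
  continuous g z.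
Proof.
intros H. apply filterlim_locally. intros eps.
destruct (H eps (cond_pos eps)) as [d [Hd Hx]].
exists (mkposreal d Hd). intros x Hb. apply Hx. exact Hb.
Qed.

Definition cvx01 (h : R -> R) := forall x y t, 0<=x<=1 -> 0<=y<=1 -> 0<=t<=1 ->
  h ((1-t)*x + t*y) <= (1-t)*h x + t*h y.

Lemma cvx_at h x y t p : cvx01 h -> 0<=x<=1 -> 0<=y<=1 -> 0<=t<=1 ->
  p = (1-t)*x+t*y -> h p <= (1-t)*h x + t*h y.
Proof. intros H ? ? ? ->; apply H; auto. Qed.

Lemma cvx_refl h : cvx01 h -> cvx01 (fun y => h (1-y)).
Proof.
intros H x y t Hx Hy Ht. simpl.
apply cvx_at; try assumption; try lra; ring.
Qed.

Lemma right_lip h z : cvx01 h -> 0<z<1 -> exists K d, 0<d /\ 0<=K /\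
  forall x, z < x <= z+d -> Rabs (h x - h z) <= K*(x-z).
Proof.
intros H Hz.
set (d := Rmin z (1-z) / 2).
assert (Hd : 0 < d /\ d <= z/2 /\ d <= (1-z)/2).
{ unfold d, Rmin; destruct Rle_dec; lra. }
set (A := h (z+d) - h z). set (B := h z - h (z-d)).
exists ((Rabs A + Rabs B)/d), d. split; [lra|]. split.
{ apply Rmult_le_pos. pose proof (Rabs_pos A); pose proof (Rabs_pos B); lra.
  left; apply Rinv_0_lt_compat; lra. }
intros x Hx.
set (t := (x-z)/d).
assert (Ht : 0 < t <= 1).
{ unfold t; split. apply Rdiv_lt_0_compat; lra.
  apply Rmult_le_reg_r with d; [lra|]. unfold Rdiv; rewrite Rmult_assoc, Rinv_l; lra. }
assert (H1 : h x <= (1-t)*h z + t*h (z+d)).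
{ apply cvx_at; try assumption; try lra. unfold t; field; lra. }
set (t' := d/(x-z+d)).
assert (Ht' : 0 < t' <= 1).
{ unfold t'; split. apply Rdiv_lt_0_compat; lra.
  apply Rmult_le_reg_r with (x-z+d); [lra|]. unfold Rdiv; rewrite Rmult_assoc, Rinv_l; lra. }
assert (H2 : h z <= (1-t')*h (z-d) + t'*h x).
{ apply cvx_at; try assumption; try lra. unfold t'; field; lra. }
assert (E1 : 1 - t' = t*t') by (unfold t, t'; field; lra).
assert (E2 : t'*(1+t) = 1) by (unfold t, t'; field; lra).
assert (H3 : h x - h z >= t*B).
{ rewrite E1 in H2. unfold B.
  assert (t' * ((1+t)*h z) <= t' * (t*h (z-d) + h x)).
  { replace (t' * ((1+t)*h z)) with (h z) by (rewrite <- Rmult_assoc, E2; ring). lra. }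
  apply Rmult_le_reg_l in H0; lra. }
assert (H4 : h x - h z <= t*A) by (unfold A; lra).
replace ((Rabs A + Rabs B) / d * (x - z)) with (t*(Rabs A + Rabs B)) by (unfold t; field; lra).
pose proof (Rle_abs A). pose proof (Rle_abs (-B)). rewrite Rabs_Ropp in H5.
assert (t*A <= t*Rabs A) by (apply Rmult_le_compat_l; lra).
assert (t*(-B) <= t*Rabs B) by (apply Rmult_le_compat_l; lra).
assert (0 <= t*Rabs A) by (apply Rmult_le_pos; [lra|apply Rabs_pos]).
assert (0 <= t*Rabs B) by (apply Rmult_le_pos; [lra|apply Rabs_pos]).
apply Rabs_le; split; [|lra].
assert (t*(-B) = -(t*B)) by ring. lra.
Qed.

Lemma small_mul K u eps : 0 <= K -> 0 <= u -> u < eps/(K+1) -> K*u < eps.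
Proof.
intros HK Hu Hlt.
apply Rmult_lt_compat_l with (r := K+1) in Hlt; [|lra].
replace ((K+1)*(eps/(K+1))) with eps in Hlt by (field; lra).
nra.
Qed.

Lemma cont_int h z : cvx01 h -> 0<z<1 -> forall eps, 0<eps -> exists d, 0<d /\
  forall x, Rabs (x-z) < d -> Rabs (h x - h z) < eps.
Proof.
intros H Hz eps He.
destruct (right_lip h z H Hz) as [K1 [d1 [Hd1 [HK1 L1]]]].
destruct (right_lip (fun y => h (1-y)) (1-z) (cvx_refl h H) ltac:(lra)) as [K2 [d2 [Hd2 [HK2 L2]]]].
assert (Hq : 0 < eps/(K1+K2+1)) by (apply Rdiv_lt_0_compat; lra).
exists (Rmin d1 (Rmin d2 (eps/(K1+K2+1)))). split.
{ repeat apply Rmin_pos; lra. }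
intros x Hx.
pose proof (Rmin_l d1 (Rmin d2 (eps/(K1+K2+1)))).
pose proof (Rmin_r d1 (Rmin d2 (eps/(K1+K2+1)))).
pose proof (Rmin_l d2 (eps/(K1+K2+1))).
pose proof (Rmin_r d2 (eps/(K1+K2+1))).
apply Rabs_def2 in Hx. destruct Hx as [Hx1 Hx2].
destruct (Rtotal_order x z) as [Hlt|[Heq|Hgt]].
- specialize (L2 (1-x) ltac:(lra)). simpl in L2.
  replace (1 - (1-x)) with x in L2 by ring. replace (1 - (1-z)) with z in L2 by ring.
  eapply Rle_lt_trans; [exact L2|].
  apply Rle_lt_trans with ((K1+K2)*(1-x-(1-z))).
  { apply Rmult_le_compat_r; lra. }
  apply small_mul; lra.
- subst. rewrite Rminus_diag, Rabs_R0; lra.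
- specialize (L1 x ltac:(lra)).
  eapply Rle_lt_trans; [exact L1|].
  apply Rle_lt_trans with ((K1+K2)*(x-z)).
  { apply Rmult_le_compat_r; lra. }
  apply small_mul; lra.
Qed.

Definition psi (h : R -> R) x := (h (1/2) - h x)/(1/2 - x).

Lemma psi_mono h x y : cvx01 h -> 0 <= x -> x < y -> y < 1/2 -> psi h x <= psi h y.
Proof.
intros H Hx Hxy Hy.
set (t := (y-x)/(1/2-x)).
assert (Ht : 0 <= t < 1).
{ unfold t; split. apply Rmult_le_pos; [lra|left; apply Rinv_0_lt_compat; lra].
  apply Rmult_lt_reg_r with (1/2-x); [lra|]. unfold Rdiv; rewrite Rmult_assoc, Rinv_l; lra. }
assert (H1 : h y <= (1-t)*h x + t*h (1/2)).
{ apply cvx_at; try assumption; try lra. unfold t; field; lra. }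
assert (E : 1/2 - y = (1-t)*(1/2-x)) by (unfold t; field; lra).
unfold psi.
replace ((h (1/2) - h x) / (1/2 - x)) with ((1-t)*(h (1/2) - h x) / (1/2 - y))
  by (rewrite E; field; lra).
unfold Rdiv. apply Rmult_le_compat_r. left; apply Rinv_0_lt_compat; lra.
lra.
Qed.

Lemma left_lim h : cvx01 h -> exists L, forall eps, 0<eps -> exists d, 0<d /\
  forall x, 0<x<d -> Rabs (h x - L) < eps.
Proof.
intros H.
set (E := fun v => exists x, 0<x<1/2 /\ v = - psi h x).
assert (HB : bound E).
{ exists (- psi h 0). intros v [x [Hx ->]].
  pose proof (psi_mono h 0 x H ltac:(lra) ltac:(lra) ltac:(lra)). lra. }
assert (HE : exists v, E v) by (exists (- psi h (1/4)); exists (1/4); split; [lra|auto]).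
destruct (completeness E HB HE) as [m [Hub Hleast]].
set (s := - m).
assert (Hs : forall x, 0<x<1/2 -> s <= psi h x).
{ intros x Hx. assert (E (- psi h x)) by (exists x; auto). apply Hub in H0. unfold s; lra. }
exists (h (1/2) - s/2).
intros eps He.
assert (Hx1 : exists x1, 0<x1<1/2 /\ psi h x1 < s + eps).
{ apply NNPP; intro Hn.
  assert (is_upper_bound E (-s-eps)).
  { intros v [x [Hx ->]]. destruct (Rlt_le_dec (psi h x) (s+eps)) as [Hl|Hl].
    - exfalso; apply Hn; exists x; auto.
    - lra. }
  apply Hleast in H0. unfold s in H0; lra. }
destruct Hx1 as [x1 [Hx1 Hpx1]].
set (C := Rabs s + eps).
assert (HC : 0 < C) by (unfold C; pose proof (Rabs_pos s); lra).
assert (Hq : 0 < eps/(2*C)) by (apply Rdiv_lt_0_compat; lra).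
exists (Rmin x1 (eps/(2*C))). split. { apply Rmin_pos; lra. }
intros x [Hx0 Hx].
pose proof (Rmin_l x1 (eps/(2*C))). pose proof (Rmin_r x1 (eps/(2*C))).
assert (P1 : s <= psi h x) by (apply Hs; lra).
assert (P2 : psi h x <= psi h x1) by (apply psi_mono; auto; lra).
assert (Eh : h x = h (1/2) - (1/2 - x) * psi h x) by (unfold psi; field; lra).
rewrite Eh.
assert (Hxc : x * C < eps/2).
{ assert (Hx' : x < eps/(2*C)) by lra.
  apply Rmult_lt_compat_r with (r := C) in Hx'; [|lra].
  replace (eps/(2*C)*C) with (eps/2) in Hx' by (field; lra). exact Hx'. }
assert (Hp : Rabs (psi h x) <= C).
{ unfold C. apply Rabs_le. pose proof (Rle_abs s). pose proof (Rle_abs (-s)). rewrite Rabs_Ropp in H3. lra. }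
assert (Hxp : Rabs (x * psi h x) < eps/2).
{ rewrite Rabs_mult, (Rabs_right x) by lra.
  eapply Rle_lt_trans; [|exact Hxc]. apply Rmult_le_compat_l; lra. }
apply Rabs_def2 in Hxp.
apply Rabs_def1; nra.
Qed.

Lemma cvx_int h : cvx01 h -> ex_RInt h 0 1.
Proof.
intros H.
destruct (left_lim h H) as [L0 HL0].
destruct (left_lim _ (cvx_refl h H)) as [L1 HL1].
set (g := fun x => if Rle_dec x 0 then L0 else if Rle_dec 1 x then L1 else h x).
apply ex_RInt_ext with g.
{ rewrite Rmin_left, Rmax_right by lra. intros x Hx. unfold g.
  destruct (Rle_dec x 0); [lra|]. destruct (Rle_dec 1 x); [lra|]. auto. }
apply (ex_RInt_continuous (V:=R_CompleteNormedModule)).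
rewrite Rmin_left, Rmax_right by lra. intros z Hz.
apply cont_eps. intros eps He.
destruct (Rle_dec z 0) as [Hz0|Hz0].
- destruct (HL0 eps He) as [d [Hd Hx]].
  exists (Rmin d (1/2)). split; [apply Rmin_pos; lra|].
  intros x Hxz. pose proof (Rmin_l d (1/2)). pose proof (Rmin_r d (1/2)).
  apply Rabs_def2 in Hxz. unfold g.
  destruct (Rle_dec z 0); [|lra].
  destruct (Rle_dec x 0). { rewrite Rminus_diag, Rabs_R0; lra. }
  destruct (Rle_dec 1 x); [lra|]. apply Hx; lra.
- destruct (Rle_dec 1 z) as [Hz1|Hz1].
  + destruct (HL1 eps He) as [d [Hd Hx]].
    exists (Rmin d (1/2)). split; [apply Rmin_pos; lra|].
    intros x Hxz. pose proof (Rmin_l d (1/2)). pose proof (Rmin_r d (1/2)).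
    apply Rabs_def2 in Hxz. unfold g.
    destruct (Rle_dec z 0); [lra|]. destruct (Rle_dec 1 z); [|lra].
    destruct (Rle_dec x 0); [lra|].
    destruct (Rle_dec 1 x). { rewrite Rminus_diag, Rabs_R0; lra. }
    specialize (Hx (1-x) ltac:(lra)). simpl in Hx. replace (1-(1-x)) with x in Hx by ring. exact Hx.
  + destruct (cont_int h z H ltac:(lra) eps He) as [d [Hd Hx]].
    exists (Rmin d (Rmin z (1-z))). split; [repeat apply Rmin_pos; lra|].
    intros x Hxz. pose proof (Rmin_l d (Rmin z (1-z))). pose proof (Rmin_r d (Rmin z (1-z))).
    pose proof (Rmin_l z (1-z)). pose proof (Rmin_r z (1-z)).
    assert (Hxz' := Hxz). apply Rabs_def2 in Hxz'. unfold g.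
    destruct (Rle_dec z 0); [lra|]. destruct (Rle_dec 1 z); [lra|].
    destruct (Rle_dec x 0); [lra|]. destruct (Rle_dec 1 x); [lra|].
    apply Hx; lra.
Qed.

Lemma J_between J a b t : is_interval J -> J a -> J b -> 0<=t<=1 -> J ((1-t)*a + t*b).
Proof.
intros HI Ha Hb Ht.
destruct (Rle_dec a b).
- apply (HI a _ b); auto; nra.
- apply (HI b _ a); auto; nra.
Qed.

Lemma cvxJ_at J f x y t p : convex_on J f -> J x -> J y -> 0<=t<=1 ->
  p = (1-t)*x+t*y -> f p <= (1-t)*f x + t*f y.
Proof. intros H ? ? ? ->; apply H; auto. Qed.

Lemma half J f a b t : is_interval J -> convex_on J f -> J a -> J b -> 0<=t<=1/2 ->
  2*t*(amean (f a) (f b) - f (amean a b)) <= (1-t)*f a + t*f b - f((1-t)*a + t*b)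
  <= 2*(1-t)*(amean (f a) (f b) - f (amean a b)).
Proof.
intros HI Hf Ha Hb Ht.
assert (Jm : J (amean a b)).
{ replace (amean a b) with ((1-1/2)*a + 1/2*b) by (unfold amean; field). apply J_between; auto; lra. }
assert (Jc : J ((1-t)*a + t*b)) by (apply J_between; auto; lra).
unfold amean in *.
split.
- assert (H1 : f ((1-t)*a + t*b) <= (1-2*t)*f a + 2*t*f ((a+b)/2)).
  { apply (cvxJ_at J); auto; try lra; field. }
  lra.
- set (s := (1/2-t)/(1-t)).
  assert (H1 : f ((a+b)/2) <= (1-s)*f ((1-t)*a + t*b) + s*f b).
  { apply (cvxJ_at J); auto.
    unfold s; split. apply Rmult_le_pos; [lra|left; apply Rinv_0_lt_compat; lra].
    apply Rmult_le_reg_r with (1-t); [lra|]. unfold Rdiv; rewrite Rmult_assoc, Rinv_l; lra.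
    unfold s; field; lra. }
  apply Rmult_le_compat_l with (r := 2*(1-t)) in H1; [|lra].
  assert (E1 : 2*(1-t)*(1-s) = 1) by (unfold s; field; lra).
  assert (E2 : 2*(1-t)*s = 1-2*t) by (unfold s; field; lra).
  rewrite Rmult_plus_distr_l, <- !Rmult_assoc, E1, E2 in H1.
  lra.
Qed.

Lemma ptwise J f a b t : is_interval J -> convex_on J f -> J a -> J b -> 0<=t<=1 ->
  2*Rmin t (1-t)*(amean (f a) (f b) - f (amean a b)) <= (1-t)*f a + t*f b - f((1-t)*a + t*b)
  <= 2*Rmax t (1-t)*(amean (f a) (f b) - f (amean a b)).
Proof.
intros HI Hf Ha Hb Ht.
destruct (Rle_dec t (1/2)).
- rewrite Rmin_left, Rmax_right by lra. apply (half J); auto; lra.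
- rewrite Rmin_right, Rmax_left by lra.
  pose proof (half J f b a (1-t) HI Hf Hb Ha ltac:(lra)) as H.
  assert (E : amean (f b) (f a) = amean (f a) (f b)) by (unfold amean; lra). rewrite E in H; clear E.
  assert (E : amean b a = amean a b) by (unfold amean; lra). rewrite E in H; clear E.
  replace ((1-(1-t))*b + (1-t)*a) with ((1-t)*a + t*b) in H by ring.
  lra.
Qed.

Lemma cvx_piece J f a b c : is_interval J -> convex_on J f -> J a -> J b -> 0<=c<=1 ->
  cvx01 (fun l => f (wmean a b (c*l))).
Proof.
intros HI Hf Ha Hb Hc x y t Hx Hy Ht.
apply (cvxJ_at J); auto.
- unfold wmean; apply J_between; auto; nra.
- unfold wmean; apply J_between; auto; nra.
- unfold wmean; ring.
Qed.

Lemma cont_min c z : 0<=c<=1 -> continuous (fun l => Rmin (c*l) (1-c*l)) z.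
Proof.
intros Hc. apply cont_eps. intros eps He. exists eps. split; auto.
intros x Hx.
assert (H : Rabs (c*x - c*z) < eps).
{ replace (c*x-c*z) with (c*(x-z)) by ring. rewrite Rabs_mult.
  rewrite (Rabs_right c) by lra. pose proof (Rabs_pos (x-z)). nra. }
apply Rabs_def2 in H. apply Rabs_def1; unfold Rmin;
repeat destruct Rle_dec; lra.
Qed.

Lemma cont_max c z : 0<=c<=1 -> continuous (fun l => Rmax (c*l) (1-c*l)) z.
Proof.
intros Hc. apply cont_eps. intros eps He. exists eps. split; auto.
intros x Hx.
assert (H : Rabs (c*x - c*z) < eps).
{ replace (c*x-c*z) with (c*(x-z)) by ring. rewrite Rabs_mult.
  rewrite (Rabs_right c) by lra. pose proof (Rabs_pos (x-z)). nra. }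
apply Rabs_def2 in H. apply Rabs_def1; unfold Rmax;
repeat destruct Rle_dec; lra.
Qed.

Lemma ex_cont (g : R -> R) : (forall z, continuous g z) -> ex_RInt g 0 1.
Proof. intros H. apply (ex_RInt_continuous (V:=R_CompleteNormedModule)). intros; apply H. Qed.

Lemma RInt_aff fa fb c :
  RInt (fun l => (1-c*l)*fa + c*l*fb) 0 1 = fa*(1-c/2) + fb*c/2.
Proof.
apply is_RInt_unique.
set (Q := fun l => fa*l - c*fa*l^2/2 + c*fb*l^2/2).
replace (fa*(1-c/2) + fb*c/2) with (minus (Q 1) (Q 0)) by (unfold Q, minus, plus, opp; simpl; field).
assert (HD : forall x:R, is_derive Q x ((1-c*x)*fa + c*x*fb)).
{ intros x. unfold Q. auto_derive. all: try exact I. all: change RinvImpl.Rinv with Rinv. field. }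
apply (is_RInt_derive (V:=R_CompleteNormedModule)).
- intros x _. apply HD.
- intros x _. apply (ex_derive_continuous (fun l => (1-c*l)*fa + c*l*fb)). auto_derive; auto.
Qed.

Lemma piece J f a b c : is_interval J -> convex_on J f -> J a -> J b -> 0<=c<=1 ->
  let D := amean (f a) (f b) - f (amean a b) in
  let I := RInt (fun l => f (wmean a b (c*l))) 0 1 in
  2*D*RInt (fun l => Rmin (c*l) (1-c*l)) 0 1 <= (f a*(1-c/2) + f b*c/2) - I
  <= 2*D*RInt (fun l => Rmax (c*l) (1-c*l)) 0 1.
Proof.
intros HI Hf Ha Hb Hc D I.
set (F := fun l => f (wmean a b (c*l))).
set (P := fun l => (1-c*l)*f a + c*l*f b).
set (m := fun l => Rmin (c*l) (1-c*l)).
set (M := fun l => Rmax (c*l) (1-c*l)).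
assert (eF : ex_RInt F 0 1) by (apply cvx_int; apply (cvx_piece J); auto).
assert (eP : ex_RInt P 0 1).
{ apply ex_cont. intros z. apply (ex_derive_continuous P). unfold P; auto_derive; auto. }
assert (em : ex_RInt m 0 1) by (apply ex_cont; intros z; apply cont_min; auto).
assert (eM : ex_RInt M 0 1) by (apply ex_cont; intros z; apply cont_max; auto).
assert (eG : ex_RInt (fun l => P l - F l) 0 1) by (apply (ex_RInt_minus (V:=R_NormedModule)); auto).
assert (em2 : ex_RInt (fun l => 2*D*m l) 0 1) by (apply (ex_RInt_scal (V:=R_NormedModule)); auto).
assert (eM2 : ex_RInt (fun l => 2*D*M l) 0 1) by (apply (ex_RInt_scal (V:=R_NormedModule)); auto).
assert (EG : RInt (fun l => P l - F l) 0 1 = RInt P 0 1 - RInt F 0 1)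
  by (apply (RInt_minus (V:=R_CompleteNormedModule)); auto).
assert (Em : RInt (fun l => 2*D*m l) 0 1 = 2*D*RInt m 0 1)
  by (apply (RInt_scal (V:=R_CompleteNormedModule)); auto).
assert (EM : RInt (fun l => 2*D*M l) 0 1 = 2*D*RInt M 0 1)
  by (apply (RInt_scal (V:=R_CompleteNormedModule)); auto).
assert (EP : RInt P 0 1 = f a*(1-c/2) + f b*c/2) by (apply RInt_aff).
fold m M. unfold I; fold F.
rewrite <- Em, <- EM, <- EP, <- EG.
split; apply RInt_le; auto; try lra; intros x Hx;
  pose proof (ptwise J f a b (c*x) HI Hf Ha Hb ltac:(nra)) as Hp;
  unfold m, M, P, F, D, wmean; lra.
Qed.

Lemma RInt_comb (u v : R -> R) p q : ex_RInt u 0 1 -> ex_RInt v 0 1 ->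
  RInt (fun l => p*u l + q*v l) 0 1 = p*RInt u 0 1 + q*RInt v 0 1.
Proof.
intros eu ev.
assert (eu' : ex_RInt (fun l => p*u l) 0 1) by (apply (ex_RInt_scal (V:=R_NormedModule)); auto).
assert (ev' : ex_RInt (fun l => q*v l) 0 1) by (apply (ex_RInt_scal (V:=R_NormedModule)); auto).
assert (E1 : RInt (fun l => p*u l + q*v l) 0 1 = RInt (fun l => p*u l) 0 1 + RInt (fun l => q*v l) 0 1)
  by (apply (RInt_plus (V:=R_CompleteNormedModule)); auto).
assert (E2 : RInt (fun l => p*u l) 0 1 = p*RInt u 0 1) by (apply (RInt_scal (V:=R_CompleteNormedModule)); auto).
assert (E3 : RInt (fun l => q*v l) 0 1 = q*RInt v 0 1) by (apply (RInt_scal (V:=R_CompleteNormedModule)); auto).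
lra.
Qed.

Theorem theorem2p17 (J : R -> Prop) (f : R -> R) (a b nu : R) :
  is_interval J -> convex_on J f -> J a -> J b -> 0 <= nu <= 1 ->
  2 * r_tilde nu * (amean (f a) (f b) - f (amean a b))
    <= wmean (f a) (f b) nu - Cfrak f nu a b
  /\ wmean (f a) (f b) nu - Cfrak f nu a b
    <= 2 * R_tilde nu * (amean (f a) (f b) - f (amean a b)).
Proof.
intros HI Hf Ha Hb Hnu.
pose proof (piece J f a b nu HI Hf Ha Hb Hnu) as P1. simpl in P1.
pose proof (piece J f b a (1-nu) HI Hf Hb Ha ltac:(lra)) as P2. simpl in P2.
assert (E : amean (f b) (f a) - f (amean b a) = amean (f a) (f b) - f (amean a b))
  by (unfold amean; replace ((b+a)/2) with ((a+b)/2) by field; lra).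
rewrite E in P2.
set (D := amean (f a) (f b) - f (amean a b)) in *.
assert (er1 : ex_RInt (r1 nu) 0 1) by (apply ex_cont; intros z; apply cont_min; lra).
assert (er2 : ex_RInt (r2 nu) 0 1).
{ apply ex_cont; intros z. unfold r2. apply (cont_min (1-nu)); lra. }
assert (eR1 : ex_RInt (Defs.R1 nu) 0 1) by (apply ex_cont; intros z; apply cont_max; lra).
assert (eR2 : ex_RInt (Defs.R2 nu) 0 1).
{ apply ex_cont; intros z. unfold Defs.R2. apply (cont_max (1-nu)); lra. }
assert (Er : r_tilde nu = (1-nu)*RInt (r1 nu) 0 1 + nu*RInt (r2 nu) 0 1)
  by (unfold r_tilde; apply RInt_comb; auto).
assert (ER : R_tilde nu = (1-nu)*RInt (Defs.R1 nu) 0 1 + nu*RInt (Defs.R2 nu) 0 1)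
  by (unfold R_tilde; apply RInt_comb; auto).
change (RInt (fun l => Rmin (nu*l) (1-nu*l)) 0 1) with (RInt (r1 nu) 0 1) in P1.
change (RInt (fun l => Rmax (nu*l) (1-nu*l)) 0 1) with (RInt (Defs.R1 nu) 0 1) in P1.
change (RInt (fun l => Rmin ((1-nu)*l) (1-(1-nu)*l)) 0 1) with (RInt (r2 nu) 0 1) in P2.
change (RInt (fun l => Rmax ((1-nu)*l) (1-(1-nu)*l)) 0 1) with (RInt (Defs.R2 nu) 0 1) in P2.
set (I1 := RInt (fun l => f (wmean a b (nu*l))) 0 1) in *.
set (I2 := RInt (fun l => f (wmean b a ((1-nu)*l))) 0 1) in *.
assert (EC : wmean (f a) (f b) nu - Cfrak f nu a b =
  (1-nu)*((f a*(1-nu/2) + f b*nu/2) - I1) + nu*((f b*(1-(1-nu)/2) + f a*(1-nu)/2) - I2))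
  by (unfold wmean, Cfrak; fold I1 I2; field).
rewrite EC, Er, ER.
destruct P1 as [P1a P1b]. destruct P2 as [P2a P2b].
apply Rmult_le_compat_l with (r := 1-nu) in P1a, P1b; try lra.
apply Rmult_le_compat_l with (r := nu) in P2a, P2b; try lra.
all: try (split; nra).
Qed.
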